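(* Let $f:\mathbb{R}^d\to\mathbb{R}^d$ be a diffeomorphism. Let $\mathcal{C}$ denote the set of non-empty compact subsets of $\mathbb{R}^d$, let $d:\mathcal{C}\times\mathcal{C}\to[0,\infty)$ be any metric on $\mathcal{C}$, and define $E:\mathcal{C}\to[0,\infty)$ by $E(X)=d(X,f(X))$. For $r>0$ let $B_r(0)$ be the ball of radius $r$ centered at $0$, and for a compact set $Q\subset\mathbb{R}^d$ let $\mathrm{Inv}(Q)=\{x\in Q \mid f^k(x)\in Q \text{ for all } k\in\mathbb{Z}\}$ be the maximal invariant set in $Q$. Suppose that there is $S\in\mathcal{C}$ such that $\mathrm{Inv}(B_r(0))=S$ for all sufficiently large $r$. Then $S$ is the unique minimizer of $E$ on $\mathcal{C}$ which is maximal with respect to the partial order given by set inclusion $\subseteq$.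
   Context: A set $X\subset\mathbb{R}^d$ is called invariant if $X=f(X)$. Since $d$ is a metric, $E(X)=0$ if and only if $X$ is invariant. *)

(* Defs.v *)
From HB Require Import structures.
From mathcomp Require Import all_boot all_order all_algebra.
From mathcomp Require Import all_classical all_reals all_analysis.
Set Implicit Arguments. Unset Strict Implicit. Unset Printing Implicit Defensive.
Import Order.TTheory GRing.Theory Num.Theory.
Import numFieldNormedType.Exports.
Local Open Scope classical_set_scope.
Local Open Scope ring_scope.

Definition C1 (R : realType) (d : nat) (f : 'rV[R]_d -> 'rV[R]_d) : Prop :=
  (forall x, differentiable f x) /\
  (forall v : 'rV[R]_d, continuous (fun x => 'D_v f x)).

Definition diffeo (R : realType) (d : nat) (f g : 'rV[R]_d -> 'rV[R]_d) : Prop :=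
  cancel f g /\ cancel g f /\ C1 f /\ C1 g.

Definition fpow (T : Type) (f g : T -> T) (k : int) : T -> T :=
  match k with
  | Posz n => iter n f
  | Negz n => iter n.+1 g
  end.

Definition Ccal (R : realType) (d : nat) : set (set 'rV[R]_d) :=
  [set X | compact X /\ X !=set0].
Arguments Ccal : clear implicits.

Definition is_metric_on (T : Type) (R : realType) (C : set T) (dist : T -> T -> R) : Prop :=
  (forall X Y, C X -> C Y -> 0 <= dist X Y) /\
  (forall X Y, C X -> C Y -> (dist X Y = 0 <-> X = Y)) /\
  (forall X Y, C X -> C Y -> dist X Y = dist Y X) /\
  (forall X Y Z, C X -> C Y -> C Z -> dist X Z <= dist X Y + dist Y Z).

Definition eball (R : realType) (d : nat) (r : R) : set 'rV[R]_d :=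
  [set x | \sum_(i < d) (x ord0 i) ^+ 2 <= r ^+ 2].
Arguments eball {R} d r.

Definition maxInv (R : realType) (d : nat) (f g : 'rV[R]_d -> 'rV[R]_d)
  (Q : set 'rV[R]_d) : set 'rV[R]_d :=
  [set x | Q x /\ forall k : int, Q (fpow f g k x)].

Definition energy (R : realType) (d : nat) (f : 'rV[R]_d -> 'rV[R]_d)
  (dist : set 'rV[R]_d -> set 'rV[R]_d -> R) (X : set 'rV[R]_d) : R :=
  dist X (f @` X).

Definition is_minimizer (R : realType) (d : nat) (f : 'rV[R]_d -> 'rV[R]_d)
  (dist : set 'rV[R]_d -> set 'rV[R]_d -> R) (X : set 'rV[R]_d) : Prop :=
  Ccal R d X /\ forall Y, Ccal R d Y -> energy f dist X <= energy f dist Y.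

Definition is_maximal_minimizer (R : realType) (d : nat) (f : 'rV[R]_d -> 'rV[R]_d)
  (dist : set 'rV[R]_d -> set 'rV[R]_d -> R) (X : set 'rV[R]_d) : Prop :=
  is_minimizer f dist X /\
  forall Y, is_minimizer f dist Y -> X `<=` Y -> Y = X.

(* Main.v *)
Require Import Defs.
From HB Require Import structures.
From mathcomp Require Import all_boot all_order all_algebra.
From mathcomp Require Import all_classical all_reals all_analysis.
From mathcomp Require Import lra.
Import Order.TTheory GRing.Theory Num.Theory.
Import numFieldNormedType.Exports.
Local Open Scope classical_set_scope.
Local Open Scope ring_scope.

Lemma bnd (R : realType) d (X : set 'rV[R]_d) : compact X ->
  exists M : R, 0 <= M /\ forall x, X x -> forall i, `|x ord0 i| <= M.
Proof.
move=> /compact_bounded [M0 [M0r HM]].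
exists (Num.max (M0 + 1) 0); split; first by rewrite le_max lexx orbT.
move=> x Xx i.
have := HM (Num.max (M0 + 1) 0); rewrite lt_max ltrDl ltr01 => /(_ isT _ Xx) /=.
apply: le_trans.
change (`|x ord0 i| <= mx_norm x); rewrite mx_normrE.
exact: (le_bigmax _ (fun ij : 'I_1 * 'I_d => `|x ij.1 ij.2|) (ord0, i)).
Qed.

Lemma in_ball (R : realType) d (M r : R) (x : 'rV[R]_d) : 0 <= M ->
  d%:R * M ^+ 2 + 1 <= r -> (forall i, `|x ord0 i| <= M) -> eball d r x.
Proof.
move=> M0 hr hx; rewrite /eball /=.
apply: (@le_trans _ _ (\sum_(i < d) M ^+ 2)).
  apply: ler_sum => i _; have := hx i; rewrite ler_norml => /andP[h1 h2]; nra.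
rewrite sumr_const card_ord -mulr_natl.
have h0 : 0 <= d%:R * M ^+ 2 :> R by apply: mulr_ge0 => //; apply: sqr_ge0.
nra.
Qed.

Section Inv.
Variables (R : realType) (d : nat) (f g : 'rV[R]_d -> 'rV[R]_d).
Hypothesis (fK : cancel f g) (gK : cancel g f).

Lemma maxInv_f Q x : maxInv f g Q x -> maxInv f g Q (f x).
Proof.
move=> [Qx H]; split; first exact: (H (Posz 1)).
case=> n; rewrite /fpow.
  by have := H (Posz n.+1); rewrite /fpow iterSr.
rewrite iterSr fK; case: n => [|m] //; exact: (H (Negz m)).
Qed.

Lemma maxInv_g Q x : maxInv f g Q x -> maxInv f g Q (g x).
Proof.
move=> [Qx H]; split; first exact: (H (Negz 0)).
case=> [[|n]|n]; rewrite /fpow.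
- exact: (H (Negz 0)).
- by rewrite iterSr gK; exact: (H (Posz n)).
- by rewrite -iterSr; exact: (H (Negz n.+1)).
Qed.

Lemma maxInv_inv Q : f @` maxInv f g Q = maxInv f g Q.
Proof.
rewrite eqEsubset; split.
  by move=> y [x Sx <-]; exact: maxInv_f.
by move=> x Sx; exists (g x); [exact: maxInv_g | exact: gK].
Qed.

Lemma inv_orbit (X : set 'rV[R]_d) : f @` X = X ->
  forall x, X x -> forall k, X (fpow f g k x).
Proof.
move=> fX x Xx; case=> n /=.
  elim: n => [|n IH] //=; rewrite -[X in X (f _)]fX; by exists (iter n f x).
elim: n => [|n IH] /=.
  by move: Xx; rewrite -[X in X x -> _]fX => -[z Xz <-]; rewrite fK.
by move: IH; rewrite -[X in X (g _) -> _]fX => -[z Xz <-]; rewrite fK.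
Qed.

End Inv.

Theorem mainTheorem1 (R : realType) (d : nat) (f g : 'rV[R]_d -> 'rV[R]_d)
  (dist : set 'rV[R]_d -> set 'rV[R]_d -> R) (S : set 'rV[R]_d) :
  diffeo f g ->
  is_metric_on (Ccal R d) dist ->
  Ccal R d S ->
  (exists r0 : R, forall r : R, r0 < r -> maxInv f g (eball d r) = S) ->
  is_maximal_minimizer f dist S /\
  (forall X, is_maximal_minimizer f dist X -> X = S).
Proof.
move=> [fK [gK [[fdiff _] _]]] [d0 [deq [_ _]]] CS [r0 Hr].
have fcont : continuous f.
  by move=> x; apply: differentiable_continuous.
have Cf : forall Y, Ccal R d Y -> Ccal R d (f @` Y).
  move=> Y [cY [y Yy]]; split; last by exists (f y), y.
  apply: continuous_compact => //; exact: continuous_subspaceT.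
have Sinv : f @` S = S.
  by rewrite -(Hr (r0 + 1)) ?ltrDl ?ltr01 // maxInv_inv.
have ES : energy f dist S = 0 by rewrite /energy Sinv; apply/deq.
have E0 : forall Y, Ccal R d Y -> 0 <= energy f dist Y.
  by move=> Y CY; apply: d0 => //; exact: Cf.
have minS : is_minimizer f dist S by split => // Y /E0; rewrite ES.
have minv : forall Y, is_minimizer f dist Y -> f @` Y = Y.
  move=> Y [CY HY]; have := HY S CS; rewrite ES => h.
  have e0 : energy f dist Y = 0 by apply/eqP; rewrite eq_le h E0.
  by apply/esym; apply/(deq _ _ CY (Cf _ CY)).
have sub : forall Y, is_minimizer f dist Y -> Y `<=` S.
  move=> Y mY; have fY := minv _ mY; have [[cY _] _] := mY.
  have [M [M0 HM]] := @bnd R d Y cY.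
  set r := Num.max (r0 + 1) (d%:R * M ^+ 2 + 1).
  rewrite -(Hr r); last by rewrite lt_max ltrDl ltr01.
  move=> x Yx; split.
    by apply: (@in_ball R d M r x M0 _ (HM _ Yx)); rewrite le_max lexx orbT.
  move=> k; apply: (@in_ball R d M r _ M0); first by rewrite le_max lexx orbT.
  by apply: HM; apply: (@inv_orbit R d f g fK).
split.
  split => // Y mY SY; rewrite eqEsubset; split => //; exact: sub.
by move=> X [mX HX]; apply/esym; apply: HX => //; exact: sub.
Qed.
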